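(* Let $R$ be a commutative domain with unit, let $f\in R$ be nonzero and non-invertible, and let $S=R[u,v]/(uv-f)$, with $R$ regarded as a subring of $S$. Let $a\in R$. Then: (i) if $a$ is irreducible in $S$, then $a$ is irreducible in $R$; (ii) if $a$ is irreducible in $R$ and not associated with $f$ in $R$, then $a$ is irreducible in $S$. *)

(* Defs.v *)
From HB Require Import structures.
From mathcomp Require Import all_boot all_order all_algebra.
From mathcomp Require Import ring_quotient generic_quotient.
From mathcomp Require Import boolp.
Set Implicit Arguments. Unset Strict Implicit. Unset Printing Implicit Defensive.
Import GRing.Theory.
Local Open Scope ring_scope.
Local Open Scope quotient_scope.

Definition is_unit (T : comNzRingType) (x : T) : Prop := exists y, x * y = 1.

Definition irreducible_elt (T : comNzRingType) (x : T) : Prop :=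
  [/\ x != 0, ~ is_unit x &
      forall y z : T, x = y * z -> is_unit y \/ is_unit z].

Definition associated (T : comNzRingType) (a b : T) : Prop :=
  exists e, is_unit e /\ a = e * b.

Section UVQuotient.
Variables (R : idomainType) (f : R).

(* The bivariate polynomial ring R[u][v] := {poly {poly R}}:
   u is the inner variable, v the outer one. *)
Definition var_u : {poly {poly R}} := ('X : {poly R})%:P.
Definition var_v : {poly {poly R}} := 'X.

Definition uvf : {poly {poly R}} := var_u * var_v - f%:P%:P.

Definition uvf_ideal : {pred {poly {poly R}}} :=
  fun p => `[< exists g, p = g * uvf >].

Lemma uvf_size : size uvf = 2%N.
Proof.
rewrite /uvf /var_u /var_v -polyCN size_MXaddC.
by rewrite polyC_eq0 polyX_eq0 /= size_polyC polyX_eq0.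
Qed.

Lemma uvf_ideal_closed : idealr_closed uvf_ideal.
Proof.
split.
- by apply/asboolP; exists 0; rewrite mul0r.
- apply/negP => /asboolP [g Hg].
  have : size (1 : {poly {poly R}}) = size (g * uvf) by rewrite -Hg.
  rewrite size_poly1.
  have [->|g0] := eqVneq g 0; first by rewrite mul0r size_poly0.
  have u0 : uvf != 0 by rewrite -size_poly_eq0 uvf_size.
  rewrite size_mul // uvf_size addn2 /=.
  by move: g0; rewrite -size_poly_eq0; case: (size g).
- move=> a u v /asboolP [g Hg] /asboolP [h Hh]; apply/asboolP.
  by exists (a * g + h); rewrite Hg Hh mulrDl mulrA.
Qed.

HB.instance Definition _ := isIdealr.Build {poly {poly R}} uvf_ideal
  uvf_ideal_closed.

Definition S_uv := {ideal_quot uvf_ideal}.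

Definition iota_S (r : R) : S_uv := \pi_S_uv (r%:P%:P).

End UVQuotient.

(* Main.v *)
Require Import Defs.
Set Warnings "-all".
From HB Require Import structures.
From mathcomp Require Import all_boot all_order all_algebra.
From mathcomp Require Import ring_quotient generic_quotient fraction boolp ring zify.
Import GRing.Theory.
Local Open Scope ring_scope.
Local Open Scope quotient_scope.

Section Proof.
Variables (R : idomainType) (f : R).
Hypothesis hf0 : f != 0.
Local Notation P2 := {poly {poly R}}.
Local Notation S := (S_uv f).
Local Notation I := (uvf_ideal f).

Lemma memI (p : P2) : p \in I <-> exists g, p = g * uvf f.
Proof. by split => /asboolP. Qed.

Lemma piP (p q : P2) : (\pi_S p = \pi_S q) <-> (p - q \in I).
Proof.
rewrite (Quotient.idealrBE (R := P2)).
by split => [->|/eqP]. 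
Qed.

Lemma piM (p q : P2) : \pi_S (p * q) = \pi_S p * \pi_S q.
Proof. exact: rmorphM. Qed.
Lemma pi1 : \pi_S (1 : P2) = 1.
Proof. exact: rmorph1. Qed.
Lemma pi0 : \pi_S (0 : P2) = 0.
Proof. exact: rmorph0. Qed.

Definition phi (p : P2) : R := (p.[1]).[f].
Lemma phiM p q : phi (p * q) = phi p * phi q.
Proof. by rewrite /phi !hornerM. Qed.
Lemma phiB p q : phi (p - q) = phi p - phi q.
Proof. by rewrite /phi !hornerD !hornerN. Qed.
Lemma phiC c : phi c%:P%:P = c.
Proof. by rewrite /phi !hornerC. Qed.
Lemma phi_uvf : phi (uvf f) = 0.
Proof.
by rewrite /phi /uvf /var_u /var_v hornerD hornerN hornerC hornerMX hornerC mulr1 hornerD hornerN !hornerC hornerX subrr.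
Qed.
Lemma phiI p : p \in I -> phi p = 0.
Proof. by move=> /memI [g ->]; rewrite phiM phi_uvf mulr0. Qed.
Lemma phi_eq p q : \pi_S p = \pi_S q -> phi p = phi q.
Proof. by move=> /piP /phiI; rewrite phiB => /eqP; rewrite subr_eq0 => /eqP. Qed.

Local Notation F := {fraction {poly R}}.
Local Notation tf := (@FracField.tofrac (poly_polynomial__canonical__GRing_IntegralDomain R)).
Local Notation "x %:F" := (tf x).
Definition w : F := (f%:P)%:F / ('X)%:F.
Definition ev (p : P2) : F := (map_poly tf p).[w].
Lemma Xfrac_neq0 : ('X : {poly R})%:F != 0.
Proof. by rewrite tofrac_eq0 polyX_eq0. Qed.
Lemma evM p q : ev (p * q) = ev p * ev q.
Proof. by rewrite /ev rmorphM hornerM. Qed.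
Lemma evB p q : ev (p - q) = ev p - ev q.
Proof. by rewrite /ev rmorphB hornerD hornerN. Qed.
Lemma evD p q : ev (p + q) = ev p + ev q.
Proof. by rewrite /ev rmorphD hornerD. Qed.
Lemma evC c : ev c%:P = c%:F.
Proof. by rewrite /ev map_polyC hornerC. Qed.
Lemma evX : ev 'X = w.
Proof. by rewrite /ev map_polyX hornerX. Qed.
Lemma evXn n : ev ('X ^+ n) = w ^+ n.
Proof. by elim: n => [|n IH]; rewrite ?expr0 ?exprS ?evM ?IH ?evX // -polyC1 evC rmorph1. Qed.
Lemma wX : w * ('X)%:F = (f%:P)%:F.
Proof. by rewrite /w divfK // Xfrac_neq0. Qed.
Lemma ev_uvf : ev (uvf f) = 0.
Proof. by rewrite /uvf /var_u /var_v evB evM evC evX mulrC wX evC subrr. Qed.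
Lemma evI p : p \in I -> ev p = 0.
Proof. by move=> /memI [g ->]; rewrite evM ev_uvf mulr0. Qed.
Lemma lcuvf : lead_coef (uvf f) = 'X.
Proof. by rewrite /lead_coef uvf_size /uvf /var_u /var_v coefB coefCM coefX coefC /= mulr1 subr0. Qed.

Lemma take1_0 (q : {poly R}) : q`_0 = 0 -> q = 'X * drop_poly 1 q.
Proof.
move=> h; rewrite -[q in LHS](poly_take_drop 1).
have -> : take_poly 1 q = 0.
  by apply/polyP => i; rewrite coef_take_poly coef0; case: i.
by rewrite add0r expr1 mulrC.
Qed.

Lemma cancelX (W : P2) : ('X%:P * W) \in I -> W \in I.
Proof.
move/memI => [G HG].
have H1 : (f%:P)%:P * G = 'X%:P * (G * 'X - W).
  by rewrite mulrBr HG /uvf /var_u /var_v; ring.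
have H0 : forall n, (G`_n)`_0 = 0.
  move=> n; have := congr1 (fun p : P2 => (p`_n)`_0) H1 => /=.
  rewrite !coefCM coefXM /= => /eqP; rewrite mulf_eq0 (negPf hf0) /=.
  by move/eqP.
pose G' := \poly_(i < size G) drop_poly 1 G`_i.
have HG' : G = 'X%:P * G'.
  apply/polyP => i; rewrite coefCM coef_poly; case: ltnP => Hi.
    exact: take1_0.
  by rewrite mulr0 nth_default.
apply/memI; exists G'.
have hX : ('X%:P : P2) != 0 by rewrite polyC_eq0 polyX_eq0.
apply: (mulfI hX); by rewrite HG HG' mulrA.
Qed.

Lemma cancelXn k (W : P2) : (('X^k)%:P * W) \in I -> W \in I.
Proof.
elim: k W => [|k IH] W; first by rewrite expr0 mul1r.
by rewrite exprS polyCM -mulrA => /cancelX /IH.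
Qed.

Lemma ev_inj p : ev p = 0 -> p \in I.
Proof.
move=> H.
have := Pdiv.WeakIdomain.divp_eq p (uvf f); rewrite lcuvf.
have hs : (size (modp p (uvf f)) <= 1)%N.
  have := Pdiv.CommonIdomain.ltn_modp p (uvf f).
  by rewrite uvf_size -size_poly_eq0 uvf_size.
rewrite (size1_polyC hs) => E.
have : ev ('X^(scalp p (uvf f)) *: p) = ev (divp p (uvf f) * uvf f + ((modp p (uvf f))`_0)%:P) by rewrite E.
rewrite -mul_polyC evM H mulr0 evD evM ev_uvf mulr0 add0r evC => /esym/eqP.
rewrite tofrac_eq0 => /eqP r0.
rewrite r0 addr0 in E; apply: (cancelXn (scalp p (uvf f))).
by rewrite mul_polyC E; apply/memI; exists (divp p (uvf f)).
Qed.
Lemma mono (a : R) (ha : a != 0) k : forall p q : {poly R},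
  p * q = a%:P * 'X^k -> exists c i, p = c%:P * 'X^i.
Proof.
have hX : ('X : {poly R}) != 0 by rewrite polyX_eq0.
elim: k => [|k IH] p q E.
  have p0 : p != 0 by apply: contraNneq ha => p0; move: E; rewrite p0 mul0r expr0 mulr1 => /esym/eqP; rewrite polyC_eq0.
  have q0 : q != 0 by apply: contraNneq ha => q0; move: E; rewrite q0 mulr0 expr0 mulr1 => /esym/eqP; rewrite polyC_eq0.
  have : size (p * q) = 1%N by rewrite E expr0 mulr1 size_polyC ha.
  rewrite size_mul // => hs.
  have hq : (0 < size q)%N by rewrite size_poly_gt0.
  have hp : (size p <= 1)%N by move: hs hq; case: (size q) => // n; rewrite addnS /= => <- _; rewrite leq_addr.
  by exists p`_0, 0%N; rewrite expr0 mulr1 -size1_polyC.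
have : (p * q)`_0 = 0 by rewrite E coefCM coefXn /= mulr0.
rewrite coef0M => /eqP; rewrite mulf_eq0 => /orP [/eqP hp | /eqP hq].
  have E' : drop_poly 1 p * q = a%:P * 'X^k.
    apply: (mulfI hX); rewrite mulrA -(take1_0 _ hp) E exprS; by rewrite mulrCA.
  have [c [i Hd]] := IH _ _ E'.
  by exists c, i.+1; rewrite (take1_0 _ hp) Hd exprS mulrCA.
have E' : p * drop_poly 1 q = a%:P * 'X^k.
  apply: (mulfI hX); rewrite mulrCA -(take1_0 _ hq) E exprS; by rewrite mulrCA.
exact: IH _ _ E'.
Qed.

Lemma mono_eq (c d : R) i j : c != 0 -> c%:P * 'X^i = d%:P * 'X^j -> i = j /\ c = d.
Proof.
move=> hc E; have := congr1 (fun p : {poly R} => p`_i) E; rewrite /= !coefCM !coefXn eqxx mulr1.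
case: eqP => [->|_]; rewrite ?mulr1 ?mulr0 => h //.
by rewrite h eqxx in hc.
Qed.

Lemma ev_poly Y : exists N (p : {poly R}), ev Y * ('X^N)%:F = p%:F.
Proof.
elim/poly_ind: Y => [|Y c [N [p Hp]]].
  by exists 0%N, 0; rewrite /ev rmorph0 horner0 mul0r rmorph0.
exists N.+1; exists (p * f%:P + c * 'X^(N.+1)).
rewrite evD evM evX evC exprS tofracD !tofracM -Hp -wX.
ring.
Qed.

Lemma shift Y N e c : ev Y * ('X^N)%:F = (c%:P * 'X^(e + N))%:F -> ev Y = (c%:P * 'X^e)%:F.
Proof.
move=> H; have hXN : ('X^N : {poly R})%:F != 0 by rewrite tofrac_eq0 expf_neq0 // polyX_eq0.
by apply: (mulIf hXN); rewrite /= H exprD mulrA tofracM.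
Qed.

Lemma ev_phi Y (c : {poly R}) : ev Y = c%:F -> phi Y = c.[f].
Proof.
move=> H; have : ev (Y - c%:P) = 0 by rewrite evB evC H subrr.
move/ev_inj/phiI; rewrite phiB /phi hornerC => /eqP; rewrite subr_eq0 => /eqP.
by rewrite -/(phi Y).
Qed.

Lemma ev_pi Y (c : {poly R}) : ev Y = c%:F -> \pi_S Y = \pi_S c%:P.
Proof.
move=> H; apply/piP/ev_inj; by rewrite evB evC H subrr.
Qed.

Lemma iotaM x y : iota_S f (x * y) = iota_S f x * iota_S f y.
Proof. by rewrite /iota_S !polyCM piM. Qed.
Lemma iota1 : iota_S f 1 = 1.
Proof. by rewrite /iota_S !polyC1 pi1. Qed.
Lemma phi1 : phi 1 = 1.
Proof. by rewrite -polyC1 -polyC1 phiC. Qed.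
Lemma phi0 : phi 0 = 0.
Proof. by rewrite /phi !horner0. Qed.

Lemma unit_back r : is_unit (iota_S f r) -> is_unit r.
Proof.
move=> [w' Hw]; exists (phi (repr w')).
rewrite -(phiC r) -phiM -phi1; apply: phi_eq.
by rewrite piM reprK pi1 -Hw.
Qed.

Lemma unit_fwd r : is_unit r -> is_unit (iota_S f r).
Proof. by move=> [r' H]; exists (iota_S f r'); rewrite -iotaM H iota1. Qed.
Lemma part1 a : irreducible_elt (iota_S f a) -> irreducible_elt a.
Proof.
move=> [h0 hnu hirr]; split.
- by apply: contraNneq h0 => ->; rewrite /iota_S !polyC0 pi0.
- by move/unit_fwd.
- move=> y z E; have := hirr (iota_S f y) (iota_S f z).
  by rewrite -iotaM -E => /(_ erefl) [] /unit_back; [left|right].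
Qed.

Lemma part2 (a : R) : ~ is_unit f -> irreducible_elt a -> ~ associated a f ->
  irreducible_elt (iota_S f a).
Proof.
move=> hfu [ha0 hanu hirr] hna; split.
- apply/negP => /eqP H; move/negP: ha0; apply; apply/eqP.
  by rewrite -(phiC a) -phi0; apply: phi_eq; rewrite pi0.
- by move/unit_back.
move=> y z Hyz.
pose Y := repr y; pose Z := repr z.
have HYZ : \pi_S (a%:P%:P) = \pi_S (Y * Z) by rewrite piM !reprK.
have hphi : a = phi Y * phi Z by rewrite -phiM -(phiC a); apply: phi_eq.
have hev : ev (Y * Z) = ev (a%:P%:P).
  by move: (evI _ (proj1 (piP _ _) HYZ)); rewrite evB => /eqP; rewrite subr_eq0 => /eqP ->.
rewrite evM evC in hev.
have [N [p Hp]] := ev_poly Y.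
have [M [q Hq]] := ev_poly Z.
have Hpq : p * q = a%:P * 'X^(N + M).
  apply/eqP; rewrite -tofrac_eq !tofracM -Hp -Hq exprD tofracM -hev; apply/eqP; ring.
have [c [i Hc]] := @mono a ha0 _ _ _ Hpq.
have [d [j Hd]] : exists d j, q = d%:P * 'X^j.
  by apply: (@mono a ha0 (N + M) q p); rewrite mulrC.
have [hij hacd] : (N + M = i + j)%N /\ a = c * d.
  apply: (@mono_eq a (c * d) (N + M) (i + j) ha0).
  by rewrite -Hpq Hc Hd polyCM exprD; ring.
case: (ltngtP N i) => hNi.
- exfalso.
  have He : ev Y = (c%:P * 'X^((i - N).-1.+1))%:F.
    have ei : ((i - N).-1.+1 + N)%N = i by move: hNi; clear; lia.
    by apply: (@shift Y N); rewrite ei Hp Hc.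
  have := ev_phi _ _ He; rewrite hornerCM hornerXn => hY.
  rewrite hY exprS in hphi.
  have Hx : a = (c * f ^+ (i - N).-1 * phi Z) * f by rewrite hphi; ring.
  have [hu|hu] := hirr _ _ Hx; last exact: hfu hu.
  by apply: hna; exists (c * f ^+ (i - N).-1 * phi Z); split.
- exfalso.
  have hMj : (M < j)%N by move: hij hNi; clear; lia.
  have He : ev Z = (d%:P * 'X^((j - M).-1.+1))%:F.
    have ej : ((j - M).-1.+1 + M)%N = j by move: hMj; clear; lia.
    by apply: (@shift Z M); rewrite ej Hq Hd.
  have := ev_phi _ _ He; rewrite hornerCM hornerXn => hZ.
  rewrite hZ exprS in hphi.
  have Hx : a = (phi Y * d * f ^+ (j - M).-1) * f by rewrite hphi; ring.
  have [hu|hu] := hirr _ _ Hx; last exact: hfu hu.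
  by apply: hna; exists (phi Y * d * f ^+ (j - M).-1); split.
- subst i.
  have hjM : j = M by move: hij; clear; lia.
  subst j.
  have hY : ev Y = (c%:P)%:F.
    by rewrite -[c%:P]mulr1 -(expr0 'X); apply: (@shift Y N 0); rewrite Hp Hc.
  have hZ : ev Z = (d%:P)%:F.
    by rewrite -[d%:P]mulr1 -(expr0 'X); apply: (@shift Z M 0); rewrite Hq Hd.
  have ey : y = iota_S f c by rewrite -[y]reprK -/Y (ev_pi _ _ hY).
  have ez : z = iota_S f d by rewrite -[z]reprK -/Z (ev_pi _ _ hZ).
  have [hu|hu] := hirr _ _ hacd.
    by left; rewrite ey; apply: unit_fwd.
  by right; rewrite ez; apply: unit_fwd.
Qed.
End Proof.

Theorem lemma1p4 (R : idomainType) (f : R) (hf0 : f != 0) (hfu : ~ is_unit f)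
  (a : R) :
  (irreducible_elt (iota_S f a) -> irreducible_elt a) /\
  (irreducible_elt a -> ~ associated a f -> irreducible_elt (iota_S f a)).
Proof.
split; first exact: part1.
exact: part2.
Qed.
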